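(* Let $\mathfrak L_1,\dots,\mathfrak L_n,\mathfrak L$ be complete lattices, let $(\mathcal F_\alpha)_{\alpha\in\mathcal O}$ with $\mathcal F_\alpha:\mathfrak L_1\times\dots\times\mathfrak L_n\to(\mathfrak L\to^+\mathfrak L)$ be a family that is $\limsup$-pushable in all arguments, and let $\phi:\mathcal O\to\mathcal O$ be monotone. Then for every nonzero limit ordinal $\lambda\in\mathcal O$ and all $\vec{\mathcal G}=(\mathcal G_1,\dots,\mathcal G_n)$ with $\mathcal G_i:\mathcal O\to\mathfrak L_i$, $$\limsup_{\alpha\to\lambda}\nu^{\phi(\alpha)}\big(\mathcal F_\alpha(\vec{\mathcal G}_\alpha)\big)\sqsubseteq\nu^{\liminf_\lambda\phi}\big(\mathcal F_\lambda(\limsup_\lambda\vec{\mathcal G})\big).$$ If moreover $\phi$ is affine, then even $$\limsup_{\alpha\to\lambda}\nu^{\phi(\alpha)}\big(\mathcal F_\alpha(\vec{\mathcal G}_\alpha)\big)\sqsubseteq\nu^{\phi(\lambda)}\big(\mathcal F_\lambda(\limsup_\lambda\vec{\mathcal G})\big).$$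
   Context: $\mathcal O$ is the set of ordinals $\le\top_{\mathsf{ord}}$ for a fixed ordinal $\top_{\mathsf{ord}}$ ($=\beth_\omega$). For $f:\mathcal O\to\mathfrak L$ into a complete lattice and a nonzero limit $\lambda$: $\liminf_\lambda f=\liminf_{\alpha\to\lambda}f(\alpha)=\sup_{\alpha_0<\lambda}\inf_{\alpha_0\le\alpha<\lambda}f(\alpha)$, $\limsup_\lambda f=\limsup_{\alpha\to\lambda}f(\alpha)=\inf_{\alpha_0<\lambda}\sup_{\alpha_0\le\alpha<\lambda}f(\alpha)$; on products of lattices, componentwise. $\mathfrak L\to^+\mathfrak L$ is the set of monotone maps. For $f:\mathfrak L\to\mathfrak L$, $g\in\mathfrak L$: $f^0(g)=g$, $f^{\alpha+1}(g)=f(f^\alpha(g))$, $f^\lambda(g)=\limsup_{\alpha\to\lambda}f^\alpha(g)$; $\nu^\alpha f:=f^\alpha(\top)$. A family $(\mathcal F_\alpha)_{\alpha\in\mathcal O}$ of maps $\mathfrak K\to\mathfrak K'$ is $\limsup$-pushable if for every $\mathcal G:\mathcal O\to\mathfrak K$ and nonzero limit $\lambda$: $\limsup_{\alpha\to\lambda}\mathcal F_\gamma(\mathcal G_\alpha)\sqsubseteq\mathcal F_\gamma(\limsup_{\alpha\to\lambda}\mathcal G_\alpha)$ for all $\gamma\in\mathcal O$, and $\limsup_{\alpha\to\lambda}\mathcal F_\alpha(\mathcal G_\alpha)\sqsubseteq\mathcal F_\lambda(\limsup_{\alpha\to\lambda}\mathcal G_\alpha)$. ''$\limsup$-pushable in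 all arguments'' means the family $(\vec{\mathcal G},\mathcal X)\mapsto\mathcal F_\alpha(\vec{\mathcal G})(\mathcal X)$ on $\mathfrak L_1\times\dots\times\mathfrak L_n\times\mathfrak L$ is $\limsup$-pushable. A function $\phi:\mathcal O\to\mathcal O$ is affine if $\phi(\alpha)=\min\{b\alpha+\beta,\top_{\mathsf{ord}}\}$ for some $b\in\{0,1\}$ and $\beta\in\mathcal O$. *)

(* Defs.v *)
From Stdlib Require Import ClassicalEpsilon.
From mathcomp Require Import all_boot.

Set Implicit Arguments.
Unset Strict Implicit.

Record complete_lattice := CompleteLattice {
  carrier :> Type;
  le : carrier -> carrier -> Prop;
  le_refl : forall x, le x x;
  le_trans : forall x y z, le x y -> le y z -> le x z;
  le_antisym : forall x y, le x y -> le y x -> x = y;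
  sup : (carrier -> Prop) -> carrier;
  sup_ub : forall (S : carrier -> Prop) x, S x -> le x (sup S);
  sup_least : forall (S : carrier -> Prop) y,
      (forall x, S x -> le x y) -> le (sup S) y
}.

Arguments le {c} _ _.
Arguments sup {c} _.

Definition lt {L : complete_lattice} (x y : L) : Prop := le x y /\ x <> y.

Definition inf {L : complete_lattice} (S : L -> Prop) : L :=
  sup (fun y => forall x, S x -> le y x).

Definition top (L : complete_lattice) : L := sup (fun _ => True).
Definition bot (L : complete_lattice) : L := sup (fun _ => False).

Definition monotone {L L' : complete_lattice} (f : L -> L') : Prop :=
  forall x y, le x y -> le (f x) (f y).

(** * The ordinal lattice O: a complete lattice whose order is a well-order
    (ordinals [0, top_ord]).  *)
Definition is_wellorder (O : complete_lattice) : Prop :=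
  (forall x y : O, le x y \/ le y x) /\ well_founded (@lt O).

Definition is_succ {O : complete_lattice} (alpha beta : O) : Prop :=
  lt alpha beta /\ forall g, lt alpha g -> le beta g.

Definition is_limit {O : complete_lattice} (lam : O) : Prop :=
  lam <> bot O /\ forall a, lt a lam -> exists b, lt a b /\ lt b lam.

Definition limsup {O L : complete_lattice} (lam : O) (u : O -> L) : L :=
  inf (fun y => exists a0, lt a0 lam /\
         y = sup (fun z => exists a, le a0 a /\ lt a lam /\ z = u a)).

Definition liminf {O L : complete_lattice} (lam : O) (u : O -> L) : L :=
  sup (fun y => exists a0, lt a0 lam /\
         y = inf (fun z => exists a, le a0 a /\ lt a lam /\ z = u a)).

Definition is_iteration {O L : complete_lattice} (f : L -> L) (g : L)
    (h : O -> L) : Prop :=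
  h (bot O) = g /\
  (forall a b : O, is_succ a b -> h b = f (h a)) /\
  (forall lam : O, is_limit lam -> h lam = limsup lam h).

(** the (unique, O being well-ordered) function satisfying the recursion *)
Definition iter {O L : complete_lattice} (f : L -> L) (g : L) : O -> L :=
  epsilon (inhabits (fun _ : O => g)) (is_iteration f g).

Definition nu {O L : complete_lattice} (alpha : O) (f : L -> L) : L :=
  iter f (top L) alpha.

(** * Capped ordinal addition min{alpha + beta, top}:
    alpha + beta is the gamma >= alpha with [alpha, gamma) order-isomorphic to
    [0, beta); if no such gamma <= top exists, alpha + beta > top. *)
Definition seg_iso {O : complete_lattice} (alpha gamma beta : O) : Prop :=
  le alpha gamma /\
  exists f : O -> O,
    (forall x y, le alpha x -> lt x y -> lt y gamma -> lt (f x) (f y)) /\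
    (forall x, le alpha x -> lt x gamma -> lt (f x) beta) /\
    (forall z, lt z beta -> exists x, le alpha x /\ lt x gamma /\ f x = z).

Definition capped_add {O : complete_lattice} (alpha beta : O) : O :=
  epsilon (inhabits (top O))
    (fun gamma => seg_iso alpha gamma beta \/
        ((~ exists g, seg_iso alpha g beta) /\ gamma = top O)).

(** phi is affine: phi(alpha) = min{b*alpha + beta, top}, b in {0,1} *)
Definition affine {O : complete_lattice} (phi : O -> O) : Prop :=
  exists beta : O,
    (forall a, phi a = beta) \/ (forall a, phi a = capped_add a beta).

(** * limsup-pushable in all arguments, for a family
    F_alpha : L_1 x ... x L_n -> (L -> L), viewed as the family
    (G, X) |-> F_alpha(G)(X) on L_1 x ... x L_n x L (limsup componentwise). *)
Definition limsup_pushable_all {O L : complete_lattice} {n : nat}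
    {Ls : 'I_n -> complete_lattice}
    (F : O -> (forall i, Ls i) -> L -> L) : Prop :=
  forall (G : forall i, O -> Ls i) (X : O -> L) (lam : O), is_limit lam ->
    (forall gam : O,
       le (limsup lam (fun a => F gam (fun i => G i a) (X a)))
          (F gam (fun i => limsup lam (G i)) (limsup lam X))) /\
    le (limsup lam (fun a => F a (fun i => G i a) (X a)))
       (F lam (fun i => limsup lam (G i)) (limsup lam X)).

(* Main.v *)
Require Import Defs.
From Stdlib Require Import ClassicalEpsilon.
From mathcomp Require Import all_boot.
From Stdlib Require Import Classical FunctionalExtensionality PropExtensionality.
Set Implicit Arguments.
Unset Strict Implicit.

Lemma inf_lb {L : complete_lattice} (S : L -> Prop) x : S x -> le (inf S) x.
Proof. intros Hx. unfold inf. apply sup_least. intros y Hy. apply Hy, Hx. Qed.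
Lemma inf_glb {L : complete_lattice} (S : L -> Prop) y :
  (forall x, S x -> le y x) -> le y (inf S).
Proof. intros H. unfold inf. apply (@sup_ub _ (fun y => forall x, S x -> le y x)). exact H. Qed.
Lemma le_top {L : complete_lattice} (x : L) : le x (top L).
Proof. unfold top. apply (@sup_ub _ (fun _ => True)). exact I. Qed.
Lemma bot_le {L : complete_lattice} (x : L) : le (bot L) x.
Proof. unfold bot. apply sup_least. intros y []. Qed.

Lemma ltot {O : complete_lattice} (Owo : is_wellorder O) (x y : O) : le x y \/ le y x.
Proof. exact (proj1 Owo x y). Qed.
Lemma lt_not_le {O : complete_lattice} (x y : O) : lt x y -> ~ le y x.
Proof. intros [H1 H2] H3. apply H2. apply le_antisym; auto. Qed.
Lemma le_lt_trans {O : complete_lattice} (x y z : O) : le x y -> lt y z -> lt x z.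
Proof. intros H [H1 H2]. split. eapply le_trans; eauto.
  intros ->. apply H2. apply le_antisym; auto. Qed.
Lemma lt_le_trans {O : complete_lattice} (x y z : O) : lt x y -> le y z -> lt x z.
Proof. intros [H1 H2] H. split. eapply le_trans; eauto.
  intros ->. apply H2. apply le_antisym; auto. Qed.
Lemma not_le_lt {O : complete_lattice} (Owo : is_wellorder O) (x y : O) :
  ~ le x y -> lt y x.
Proof. intros H. destruct (ltot Owo x y) as [H1|H1]. contradiction.
  split; auto. intros ->. apply H, le_refl. Qed.

Lemma wf_min {O : complete_lattice} (Owo : is_wellorder O) (P : O -> Prop) x :
  P x -> exists m, P m /\ forall y, P y -> le m y.
Proof.
  destruct Owo as [Htot Hwf]. revert x.
  intro x; induction x as [x IH] using (well_founded_ind Hwf). intro Px.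
  destruct (classic (exists y, lt y x /\ P y)) as [[y [Hy Py]]|Hn].
  - exact (IH y Hy Py).
  - exists x. split; auto. intros y Py. destruct (Htot x y) as [H|H]; auto.
    destruct (classic (y = x)) as [->|Hne]. apply le_refl.
    exfalso. apply Hn. exists y. split; [split; auto | auto].
Qed.

Lemma succ_exists {O : complete_lattice} (Owo : is_wellorder O) (a l : O) :
  lt a l -> exists s, is_succ a s /\ le s l.
Proof. intros H. destruct (@wf_min O Owo (fun x => lt a x) l H) as [s [Hs Hmin]].
  exists s. split. split; auto. apply Hmin; auto. Qed.

Lemma classify {O : complete_lattice} (Owo : is_wellorder O) (d : O) :
  d = bot O \/ (exists g, is_succ g d) \/ is_limit d.
Proof.
 destruct (classic (d = bot O)) as [H|Hb]; [left; auto|right].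
 destruct (classic (exists g, is_succ g d)) as [H|Hs]; [left; auto| right].
 split; auto. intros a Ha. destruct (succ_exists Owo Ha) as [s [[Has Hmin] Hsd]].
 exists s. split; auto. split; auto. intro E. subst. apply Hs. exists a. split; auto.
Qed.

Lemma succ_le {O : complete_lattice} (Owo : is_wellorder O) (g d b : O) :
  is_succ g d -> lt b d -> le b g.
Proof. intros [H1 H2] H. destruct (ltot Owo b g) as [|H3]; auto.
  destruct (classic (g = b)) as [->|Hne]. apply le_refl.
  exfalso. apply (lt_not_le H). apply H2. split; auto. Qed.

Lemma limit_succ_lt {O : complete_lattice} (a s l : O) :
  is_limit l -> lt a l -> is_succ a s -> lt s l.
Proof. intros [_ Hl] Ha [H1 H2]. destruct (Hl a Ha) as [b [Hab Hbl]].
  apply le_lt_trans with b; auto. Qed.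

Lemma bot_lt_limit {O : complete_lattice} (l : O) : is_limit l -> lt (bot O) l.
Proof. intros [H _]. split. apply bot_le. intros E. apply H; auto. Qed.

Lemma succ_unique {O : complete_lattice} (Owo : is_wellorder O) (a c b : O) :
  is_succ a b -> is_succ c b -> a = c.
Proof. intros Ha Hc. apply le_antisym.
  apply (succ_le Owo Hc). apply Ha. apply (succ_le Owo Ha). apply Hc. Qed.

Definition tail {O L : complete_lattice} (l a0 : O) (u : O -> L) : L :=
  sup (fun z => exists a, le a0 a /\ lt a l /\ z = u a).

Lemma tail_ub {O L : complete_lattice} (l a0 a : O) (u : O -> L) :
  le a0 a -> lt a l -> le (u a) (tail l a0 u).
Proof. intros. unfold tail. apply (@sup_ub _ (fun z => exists a, le a0 a /\ lt a l /\ z = u a)).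
  exists a. auto. Qed.
Lemma tail_least {O L : complete_lattice} (l a0 : O) (u : O -> L) c :
  (forall a, le a0 a -> lt a l -> le (u a) c) -> le (tail l a0 u) c.
Proof. intros H. unfold tail. apply sup_least. intros z [a [H1 [H2 ->]]]. auto. Qed.
Lemma limsup_le_tail {O L : complete_lattice} (l a0 : O) (u : O -> L) :
  lt a0 l -> le (limsup l u) (tail l a0 u).
Proof. intros H. unfold limsup. apply inf_lb. exists a0. split; auto. Qed.
Lemma limsup_glb {O L : complete_lattice} (l : O) (u : O -> L) c :
  (forall a0, lt a0 l -> le c (tail l a0 u)) -> le c (limsup l u).
Proof. intros H. unfold limsup. apply inf_glb. intros y [a0 [Ha ->]]. apply H; auto. Qed.

Lemma limsup_ge {O L : complete_lattice} (l : O) (u : O -> L) c :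
  (forall a, lt a l -> le c (u a)) -> le c (limsup l u).
Proof. intros H. apply limsup_glb. intros a0 Ha. apply le_trans with (u a0); auto.
  apply tail_ub; auto. apply le_refl. Qed.

Lemma limsup_mono_ev {O L : complete_lattice} (Owo : is_wellorder O) (l a1 : O) (u v : O -> L) :
  lt a1 l -> (forall a, le a1 a -> lt a l -> le (u a) (v a)) ->
  le (limsup l u) (limsup l v).
Proof. intros Ha1 H. apply limsup_glb. intros a0 Ha0.
  destruct (ltot Owo a0 a1) as [H0|H0].
  - apply le_trans with (tail l a1 u). apply limsup_le_tail; auto.
    apply tail_least. intros a Hm Hl. apply le_trans with (v a); auto.
    apply tail_ub; auto. eapply le_trans; eauto.
  - apply le_trans with (tail l a0 u). apply limsup_le_tail; auto.
    apply tail_least. intros a Hm Hl. apply le_trans with (v a).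
    apply H; auto. eapply le_trans; eauto. apply tail_ub; auto.
Qed.

Lemma limsup_const {O L : complete_lattice} (l : O) (c : L) :
  is_limit l -> limsup l (fun _ => c) = c.
Proof. intros Hl. apply le_antisym.
  - apply le_trans with (tail l (bot O) (fun _ => c)). apply limsup_le_tail.
    apply bot_lt_limit; auto. apply tail_least. intros; apply le_refl.
  - apply limsup_ge. intros; apply le_refl.
Qed.

Lemma limsup_ext {O L : complete_lattice} (l : O) (u v : O -> L) :
  (forall a, lt a l -> u a = v a) -> limsup l u = limsup l v.
Proof. intros H. unfold limsup.
  assert (E : forall a0, (fun z => exists a, le a0 a /\ lt a l /\ z = u a) =
                         (fun z => exists a, le a0 a /\ lt a l /\ z = v a)).
  { intros a0. apply functional_extensionality. intro z. apply propositional_extensionality.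
    split; intros [a [H1 [H2 H3]]]; exists a; subst z; (split; [exact H1|split; [exact H2|]]).
    apply H; auto. symmetry; apply H; auto. }
  f_equal. apply functional_extensionality. intro y. apply propositional_extensionality.
  split; intros [a0 [Ha Hy]]; exists a0; split; auto; rewrite Hy E; auto.
Qed.
Definition ext_rec {O L : complete_lattice} (a : O) (r : forall b : O, lt b a -> L) (b : O) : L :=
  match excluded_middle_informative (lt b a) with
  | left H => r b H | right _ => top L end.
Definition pred_of {O : complete_lattice} (a : O) : O := epsilon (inhabits a) (fun b => is_succ b a).
Definition step {O L : complete_lattice} (f : L -> L) (g : L) (a : O)
   (r : forall b, lt b a -> L) : L :=
  match excluded_middle_informative (a = bot O) with
  | left _ => g
  | right _ => match excluded_middle_informative (exists b, is_succ b a) with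
     | left _ => f (ext_rec r (pred_of a))
     | right _ => limsup a (ext_rec r) end end.
Definition hrec {O L : complete_lattice} (Owo : is_wellorder O) (f : L -> L) (g : L) : O -> L :=
  Fix (proj2 Owo) (fun _ => L) (step f g).

Lemma hrec_eq {O L : complete_lattice} (Owo : is_wellorder O) (f : L -> L) (g : L) (a : O) :
  hrec Owo f g a = step f g (a:=a) (fun b _ => hrec Owo f g b).
Proof. unfold hrec. refine (Fix_eq (proj2 Owo) (fun _ => L) (step f g) _ a). intros x r1 r2 H.
  assert (E : ext_rec r1 = ext_rec r2).
  { apply functional_extensionality. intro b. unfold ext_rec.
    destruct (excluded_middle_informative (lt b x)); auto. }
  unfold step. rewrite E. reflexivity. Qed.

Lemma ext_rec_lt {O L : complete_lattice} (a b : O) (h : O -> L) :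
  lt b a -> ext_rec (fun c (_ : lt c a) => h c) b = h b.
Proof. intros H. unfold ext_rec. destruct (excluded_middle_informative (lt b a)); auto.
  contradiction. Qed.

Lemma iteration_exists {O L : complete_lattice} (Owo : is_wellorder O) (f : L -> L) (g : L) :
  exists h : O -> L, is_iteration f g h.
Proof. exists (hrec Owo f g). split; [|split].
  - rewrite hrec_eq. unfold step.
    destruct (excluded_middle_informative (bot O = bot O)); auto. contradiction.
  - intros a b Hab. rewrite hrec_eq. unfold step.
    destruct (excluded_middle_informative (b = bot O)) as [Hb|Hb].
    { exfalso. subst b. apply (lt_not_le (proj1 Hab)). apply bot_le. }
    destruct (excluded_middle_informative (exists b0, is_succ b0 b)) as [Hs|Hs].
    2:{ exfalso. apply Hs. exists a; auto. }
    assert (Hp : is_succ (pred_of b) b) by (unfold pred_of; apply epsilon_spec; exists a; auto).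
    rewrite (succ_unique Owo Hp Hab). rewrite ext_rec_lt; auto. apply Hab.
  - intros l Hl. rewrite hrec_eq. unfold step.
    destruct (excluded_middle_informative (l = bot O)) as [Hb|Hb].
    { exfalso. apply (proj1 Hl); auto. }
    destruct (excluded_middle_informative (exists b0, is_succ b0 l)) as [Hs|Hs].
    { exfalso. destruct Hs as [g0 Hg]. destruct (proj2 Hl g0 (proj1 Hg)) as [b [Hb1 Hb2]].
      apply (lt_not_le Hb2). apply Hg; auto. }
    apply limsup_ext. intros a Ha. apply ext_rec_lt; auto.
Qed.

Lemma iter_spec {O L : complete_lattice} (Owo : is_wellorder O) (f : L -> L) (g : L) :
  is_iteration f g (@Defs.iter O L f g).
Proof. unfold Defs.iter. apply epsilon_spec. apply iteration_exists; auto. Qed.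

Lemma nu_bot {O L : complete_lattice} (Owo : is_wellorder O) (f : L -> L) :
  nu (bot O) f = top L.
Proof. unfold nu. apply (iter_spec Owo f (top L)). Qed.
Lemma nu_succ {O L : complete_lattice} (Owo : is_wellorder O) (f : L -> L) (a b : O) :
  is_succ a b -> nu b f = f (nu a f).
Proof. intros H. unfold nu. apply (proj1 (proj2 (iter_spec Owo f (top L)))); auto. Qed.
Lemma nu_lim {O L : complete_lattice} (Owo : is_wellorder O) (f : L -> L) (l : O) :
  is_limit l -> nu l f = limsup l (fun a => nu a f).
Proof. intros H. unfold nu. apply (proj2 (proj2 (iter_spec Owo f (top L)))); auto. Qed.
Lemma nu_dec {O L : complete_lattice} (Owo : is_wellorder O) (f : L -> L) (Hm : monotone f) (d : O) :
  (forall b, le b d -> le (nu d f) (nu b f)) /\ le (f (nu d f)) (nu d f).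
Proof.
  induction d as [d IH] using (well_founded_ind (proj2 Owo)).
  destruct (classify Owo d) as [->|[[g Hg]|Hl]].
  - split.
    + intros b Hb. assert (b = bot O) by (apply le_antisym; auto; apply bot_le).
      subst b. apply le_refl.
    + rewrite (nu_bot Owo f). apply le_top.
  - destruct (IH g (proj1 Hg)) as [Ag Bg]. split.
    + intros b Hb. destruct (classic (b = d)) as [<-|Hne]; [apply le_refl|].
      assert (Hbg : le b g) by (apply (succ_le Owo Hg); split; auto).
      rewrite (nu_succ Owo f Hg). apply le_trans with (nu g f); [exact Bg | apply Ag; auto].
    + rewrite (nu_succ Owo f Hg). apply Hm. exact Bg.
  - split.
    + intros b Hb. destruct (classic (b = d)) as [<-|Hne]; [apply le_refl|].
      rewrite (nu_lim Owo f Hl). apply le_trans with (tail d b (fun a => nu a f)).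
      apply limsup_le_tail. split; auto.
      apply tail_least. intros a H1 H2. apply (proj1 (IH a H2)). exact H1.
    + rewrite (nu_lim Owo f Hl). apply limsup_glb. intros a0 Ha0.
      destruct (succ_exists Owo Ha0) as [s [Hs Hsd]].
      assert (Hsl : lt s d) by (apply (limit_succ_lt Hl Ha0 Hs)).
      apply le_trans with (f (nu a0 f)).
      * apply Hm. apply le_trans with (tail d a0 (fun a => nu a f)).
        apply limsup_le_tail; auto.
        apply tail_least. intros a H1 H2. apply (proj1 (IH a H2)). exact H1.
      * rewrite <- (nu_succ Owo f Hs). apply (@tail_ub O L d a0 s (fun a => nu a f)); auto.
        apply Hs.
Qed.

Lemma keyK {O L : complete_lattice} (Owo : is_wellorder O) (n : nat) (Ls : 'I_n -> complete_lattice)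
  (F : O -> (forall i, Ls i) -> L -> L)
  (Fmono : forall (a : O) (g : forall i, Ls i), monotone (F a g))
  (Fpush : limsup_pushable_all F) (lam : O) (G : forall i, O -> Ls i) (Hlam : is_limit lam) (b : O) :
  le (limsup lam (fun a => nu b (F a (fun i => G i a))))
     (nu b (F lam (fun i => limsup lam (G i)))).
Proof.
  induction b as [b IH] using (well_founded_ind (proj2 Owo)).
  destruct (classify Owo b) as [->|[[g Hg]|Hl]].
  - rewrite (nu_bot Owo). apply le_top.
  - assert (E : (fun a => nu b (F a (fun i => G i a))) =
                (fun a => F a (fun i => G i a) (nu g (F a (fun i => G i a))))).
    { apply functional_extensionality. intro a. apply (nu_succ Owo _ Hg). }
    rewrite E (nu_succ Owo _ Hg).
    apply le_trans with (F lam (fun i => limsup lam (G i)) (limsup lam (fun a => nu g (F a (fun i => G i a))))).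
    + exact (proj2 (Fpush G (fun a => nu g (F a (fun i => G i a))) lam Hlam)).
    + apply Fmono. apply IH. apply Hg.
  - rewrite (nu_lim Owo (F lam (fun i => limsup lam (G i))) Hl).
    apply limsup_ge. intros c Hc.
    apply le_trans with (limsup lam (fun a => nu c (F a (fun i => G i a)))).
    + apply (limsup_mono_ev Owo (bot_lt_limit Hlam)). intros a _ _.
      apply (proj1 (nu_dec Owo (Fmono a _) b)). apply Hc.
    + apply IH. exact Hc.
Qed.

Lemma liminf_lt {O : complete_lattice} (Owo : is_wellorder O) (l : O) (phi : O -> O) (b : O) :
  lt b (liminf l phi) -> exists a0, lt a0 l /\ forall a, le a0 a -> lt a l -> lt b (phi a).
Proof. intros H. apply NNPP. intros Hn. apply (lt_not_le H).
  unfold liminf. apply sup_least. intros y [a0 [Ha0 ->]].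
  set (I := inf (fun z => exists a, le a0 a /\ lt a l /\ z = phi a)).
  destruct (classic (le I b)) as [|Hnle]; auto.
  exfalso. apply Hn. exists a0. split; auto. intros a H1 H2.
  apply lt_le_trans with I. apply (not_le_lt Owo Hnle).
  apply inf_lb. exists a; auto.
Qed.

Lemma capped_ge {O : complete_lattice} (a b : O) : le a (capped_add a b).
Proof. unfold capped_add.
  assert (H : exists g, seg_iso a g b \/ ((~ exists g, seg_iso a g b) /\ g = top O)).
  { destruct (classic (exists g, seg_iso a g b)) as [[g Hg]|Hn].
    - exists g; left; auto.
    - exists (top O); right; auto. }
  destruct (epsilon_spec (inhabits (top O)) _ H) as [[Hs _]|[_ ->]]; auto.
  apply le_top.
Qed.

Lemma stationary {O L : complete_lattice} (Owo : is_wellorder O) (n : nat) (Ls : 'I_n -> complete_lattice)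
  (F : O -> (forall i, Ls i) -> L -> L)
  (Fmono : forall (a : O) (g : forall i, Ls i), monotone (F a g))
  (Fpush : limsup_pushable_all F) (lam : O) (G : forall i, O -> Ls i) (Hlam : is_limit lam) (d : O) :
  le lam d -> nu d (F lam (fun i => limsup lam (G i))) = nu lam (F lam (fun i => limsup lam (G i))).
Proof.
  set (f := F lam (fun i => limsup lam (G i))).
  assert (Hfm : monotone f) by apply Fmono.
  assert (FP : f (nu lam f) = nu lam f).
  { apply le_antisym. apply (proj2 (nu_dec Owo Hfm lam)).
    have P := proj1 (Fpush (fun i => fun _ : O => limsup lam (G i)) (fun a => nu a f) lam Hlam) lam.
    cbv beta in P.
    assert (E : (fun i => limsup lam (fun _ : O => limsup lam (G i))) = (fun i => limsup lam (G i))).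
    { apply functional_extensionality_dep. intro i. apply limsup_const; auto. }
    rewrite E -(nu_lim Owo f Hlam) in P. fold f in P.
    apply le_trans with (limsup lam (fun a => f (nu a f))); auto.
    apply limsup_ge. intros a Ha. destruct (succ_exists Owo Ha) as [s [Hs Hsl]].
    rewrite <- (nu_succ Owo f Hs). apply (proj1 (nu_dec Owo Hfm lam)); auto. }
  induction d as [d IH] using (well_founded_ind (proj2 Owo)). intros Hd.
  destruct (classic (d = lam)) as [->|Hne]; auto.
  assert (Hlt : lt lam d) by (split; auto).
  destruct (classify Owo d) as [->|[[g Hg]|Hl]].
  - exfalso. apply (lt_not_le Hlt). apply bot_le.
  - assert (Hg' : le lam g).
    { destruct (ltot Owo lam g) as [|H]; auto.
      destruct (classic (g = lam)) as [->|Hn]; [apply le_refl|].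
      exfalso. apply (lt_not_le Hlt). apply Hg. split; auto. }
    rewrite (nu_succ Owo f Hg) IH; auto. apply Hg.
  - apply le_antisym. apply (proj1 (nu_dec Owo Hfm d)); auto.
    rewrite (nu_lim Owo f Hl). apply limsup_ge. intros a Ha.
    destruct (ltot Owo a lam) as [H|H].
    + apply (proj1 (nu_dec Owo Hfm lam)); auto.
    + rewrite IH; auto. apply le_refl.
Qed.
Unset Implicit Arguments.

Theorem theorem4p15 (O : complete_lattice) (Owo : is_wellorder O)
  (n : nat) (Ls : 'I_n -> complete_lattice) (L : complete_lattice)
  (F : O -> (forall i, Ls i) -> L -> L)
  (Fmono : forall (a : O) (g : forall i, Ls i), monotone (F a g))
  (Fpush : limsup_pushable_all F)
  (phi : O -> O) (phimono : monotone phi) :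
  (forall (lam : O) (G : forall i, O -> Ls i), is_limit lam ->
     le (limsup lam (fun a => nu (phi a) (F a (fun i => G i a))))
        (nu (liminf lam phi) (F lam (fun i => limsup lam (G i))))) /\
  (affine phi ->
   forall (lam : O) (G : forall i, O -> Ls i), is_limit lam ->
     le (limsup lam (fun a => nu (phi a) (F a (fun i => G i a))))
        (nu (phi lam) (F lam (fun i => limsup lam (G i))))).
Proof.
  split.
  - intros lam G Hlam.
    set (mu := liminf lam phi).
    destruct (classify Owo mu) as [E|[[g Hg]|Hl]].
    + rewrite E (nu_bot Owo). apply le_top.
    + destruct (liminf_lt Owo (proj1 Hg)) as [a0 [Ha0 H]].
      apply le_trans with (limsup lam (fun a => nu mu (F a (fun i => G i a)))).
      * apply (limsup_mono_ev Owo Ha0). intros a H1 H2.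
        apply (proj1 (nu_dec Owo (Fmono a _) (phi a))). apply Hg. apply H; auto.
      * apply keyK; auto.
    + rewrite (nu_lim Owo _ Hl). apply limsup_ge. intros b Hb.
      destruct (liminf_lt Owo Hb) as [a0 [Ha0 H]].
      apply le_trans with (limsup lam (fun a => nu b (F a (fun i => G i a)))).
      * apply (limsup_mono_ev Owo Ha0). intros a H1 H2.
        apply (proj1 (nu_dec Owo (Fmono a _) (phi a))). apply H; auto.
      * apply keyK; auto.
  - intros [b0 [Hc|Hc]] lam G Hlam.
    + assert (E : (fun a => nu (phi a) (F a (fun i => G i a))) = (fun a => nu b0 (F a (fun i => G i a)))).
      { apply functional_extensionality. intro a. rewrite Hc. reflexivity. }
      rewrite E Hc. apply keyK; auto.
    + assert (Hge : forall a, le a (phi a)) by (intro a; rewrite Hc; apply capped_ge).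
      rewrite (stationary Owo Fmono Fpush G Hlam (Hge lam)).
      rewrite (nu_lim Owo _ Hlam). apply limsup_ge. intros b Hb.
      apply le_trans with (limsup lam (fun a => nu b (F a (fun i => G i a)))).
      * apply (limsup_mono_ev Owo Hb). intros a H1 H2.
        apply (proj1 (nu_dec Owo (Fmono a _) (phi a))). apply le_trans with a; auto.
      * apply keyK; auto.
Qed.
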